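(* For $d\in\mathbb{N}$ let $\zeta_d\in\mathbb{C}$ be a primitive $d$-th root of unity. The following are equivalent: (i) for every $n\in\mathbb{N}$ the number of frieze patterns of height $n$ over $\mathbb{Z}[\zeta_d]\setminus\{0\}$ is finite; (ii) $\mathbb{Z}[\zeta_d]$ is a discrete subset of $\mathbb{C}$; (iii) the group of units of $\mathbb{Z}[\zeta_d]$ is finite; (iv) $d\in\{1,2,3,4,6\}$.
   Context: A frieze pattern of height $n$ over $S\subseteq\mathbb{C}$ is a family $(c_{i,j})_{i\in\mathbb{Z},\ i\le j\le i+n+3}$ of complex numbers such that: - $c_{i,i}=c_{i,i+n+3}=0$ and $c_{i,i+1}=c_{i,i+n+2}=1$; - $c_{i,j}\in S$ for $i+2\le j\le i+n+1$; - every adjacent $2\times2$ determinant $c_{i,j}c_{i+1,j+1}-c_{i,j+1}c_{i+1,j}$ (all entries defined) equals $1$. *)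

(* Defs.v *)
(* the complex numbers are modelled by algC (algebraic complex
   numbers), which suffices since every set involved lies in Q-bar. *)
From HB Require Import structures.
From mathcomp Require Import all_boot all_order all_algebra all_field.
Set Implicit Arguments. Unset Strict Implicit. Unset Printing Implicit Defensive.
Import Order.TTheory GRing.Theory Num.Theory.
Local Open Scope ring_scope.

Definition Zring (z : algC) (x : algC) : Prop :=
  exists s : seq int, x = \sum_(i < size s) (s`_i)%:~R * z ^+ i.

(* A frieze pattern of height n over S: the family (c i j) for i in Z,
   i <= j <= i+n+3 (values of c outside this range are irrelevant). *)
Definition is_frieze (n : nat) (S : algC -> Prop) (c : int -> int -> algC) : Prop :=
  [/\ forall i : int, c i i = 0 /\ c i (i + n%:Z + 3) = 0,
      forall i : int, c i (i + 1) = 1 /\ c i (i + n%:Z + 2) = 1,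
      forall i j : int, i + 2 <= j <= i + n%:Z + 1 -> S (c i j)
    & forall i j : int, i + 1 <= j <= i + n%:Z + 2 ->
        c i j * c (i + 1) (j + 1) - c i (j + 1) * c (i + 1) j = 1].

Definition frieze_agree (n : nat) (c c' : int -> int -> algC) : Prop :=
  forall i j : int, i <= j <= i + n%:Z + 3 -> c i j = c' i j.

Definition finitely_many_friezes (n : nat) (S : algC -> Prop) : Prop :=
  exists (N : nat) (f : 'I_N -> int -> int -> algC),
    forall c, is_frieze n S c -> exists k : 'I_N, frieze_agree n c (f k).

Definition discrete_subset (S : algC -> Prop) : Prop :=
  forall x, S x -> exists2 eps : algC, 0 < eps &
    forall y, S y -> y != x -> eps <= `|y - x|.

Definition finite_units_Zring (z : algC) : Prop :=
  exists s : seq algC, forall u, Zring z u -> (exists2 v, Zring z v & u * v = 1) -> u \in s.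

(* Main.v *)
Require Import Defs.
From HB Require Import structures.
From mathcomp Require Import all_boot all_order all_algebra all_field zify ring lra.
From Stdlib Require Import ClassicalEpsilon.
Import Order.TTheory GRing.Theory Num.Theory.
Local Open Scope ring_scope.

Lemma size_mapi (p : {poly int}) : size (map_poly intr p : {poly algC}) = size p.
Proof. by apply: size_map_inj_poly; [exact: intr_inj|]. Qed.

Lemma ZringP (z x : algC) :
  Zring z x <-> exists p : {poly int}, x = (map_poly intr p).[z].
Proof.
split.
  move=> [s ->]; exists (Poly s).
  rewrite (@horner_coef_wide _ (size s)); last first.
    by rewrite size_mapi size_Poly.
  by apply: eq_bigr => i _; rewrite coef_map coef_Poly.
move=> [p ->]; exists p.
rewrite (@horner_coef_wide _ (size p)); last by rewrite size_mapi.
by apply: eq_bigr => i _; rewrite coef_map.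
Qed.

Section Closure.
Variable z : algC.
Lemma ZringD {x y} : Zring z x -> Zring z y -> Zring z (x + y).
Proof. move=> /ZringP[p ->] /ZringP[q ->]; apply/ZringP; exists (p + q).
by rewrite rmorphD hornerD. Qed.
Lemma ZringM {x y} : Zring z x -> Zring z y -> Zring z (x * y).
Proof. move=> /ZringP[p ->] /ZringP[q ->]; apply/ZringP; exists (p * q).
by rewrite rmorphM hornerM. Qed.
Lemma ZringN {x} : Zring z x -> Zring z (- x).
Proof. move=> /ZringP[p ->]; apply/ZringP; exists (- p).
by rewrite rmorphN hornerN. Qed.
Lemma Zring_int (k : int) : Zring z k%:~R.
Proof. apply/ZringP; exists k%:P. by rewrite map_polyC hornerC. Qed.
Lemma Zring_z : Zring z z.
Proof. apply/ZringP; exists 'X. by rewrite map_polyX hornerX. Qed.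
Lemma ZringB {x y} : Zring z x -> Zring z y -> Zring z (x - y).
Proof. by move=> hx hy; apply: ZringD hx (ZringN hy). Qed.
Lemma Zring0 : Zring z 0. Proof. exact: (Zring_int 0). Qed.
Lemma Zring1 : Zring z 1. Proof. exact: (Zring_int 1). Qed.
Lemma ZringX {x} k : Zring z x -> Zring z (x ^+ k).
Proof. move=> hx; elim: k => [|k IH]; first exact: Zring1.
by rewrite exprS; apply: ZringM. Qed.
Lemma Zring_sum (I : Type) (r : seq I) (P : pred I) (F : I -> algC) :
  (forall i, P i -> Zring z (F i)) -> Zring z (\sum_(i <- r | P i) F i).
Proof. move=> h; apply: (big_ind (Zring z)) => //; [exact: Zring0 | exact: (fun x y => @ZringD x y)]. Qed.
End Closure.

Section Frieze.
Variables (n : nat) (P : algC -> Prop).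
Hypothesis HP : forall x, P x -> 1 <= `|x|.

Lemma Pnz x : P x -> x != 0.
Proof. by move=> /HP h; apply/eqP=> x0; move: h; rewrite x0 normr0 ler10. Qed.

Definition ee (c : int -> int -> algC) (i : int) (r : nat) := c i (i + r%:Z).

Lemma congr_c (c : int -> int -> algC) p q p' q' : p = p' -> q = q' -> c p q = c p' q'.
Proof. by move=> -> ->. Qed.

Fixpoint beta (s : nat) : algC := if s is s'.+1 then beta s' ^+ 2 + 1 else n.+1%:R.

Lemma beta_ge1 s : 1 <= beta s.
Proof.
elim: s => [|s IH] /=; first by rewrite ler1n.
have h0 : 0 <= beta s ^+ 2 by apply: exprn_ge0; apply: le_trans IH.
by apply: le_trans (_ : 1 <= 1 + beta s ^+ 2) _; rewrite ?lerDl // addrC.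
Qed.

Lemma beta_le s : beta s <= beta s.+1.
Proof.
rewrite /=; apply: le_trans (_ : beta s <= beta s ^+ 2) _.
  by rewrite expr2; apply: ler_peMr; [apply: le_trans (beta_ge1 s)|exact: beta_ge1].
by rewrite lerDl.
Qed.

Lemma beta_mono s k : beta s <= beta (s + k).
Proof. elim: k => [|k IH]; first by rewrite addn0. rewrite addnS; exact: le_trans IH (beta_le _). Qed.

Section One.
Variable c : int -> int -> algC.
Hypothesis Hc : is_frieze n P c.

Lemma ee0 i : ee c i 0 = 0.
Proof. case: Hc => h1 _ _ _; rewrite /ee -(h1 i).1; apply: congr_c; lia. Qed.
Lemma ee1 i : ee c i 1 = 1.
Proof. case: Hc => _ h2 _ _; rewrite /ee -(h2 i).1; apply: congr_c; lia. Qed.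
Lemma een2 i : ee c i n.+2 = 1.
Proof. case: Hc => _ h2 _ _; rewrite /ee -(h2 i).2; apply: congr_c; lia. Qed.
Lemma een3 i : ee c i n.+3 = 0.
Proof. case: Hc => h1 _ _ _; rewrite /ee -(h1 i).2; apply: congr_c; lia. Qed.
Lemma eeP i r : (2 <= r <= n.+1)%N -> P (ee c i r).
Proof. case: Hc => _ _ h3 _ hr; apply: h3; lia. Qed.
Lemma eeD i r : (1 <= r <= n.+2)%N ->
  ee c i r * ee c (i + 1) r - ee c i r.+1 * ee c (i + 1) r.-1 = 1.
Proof.
case: Hc => _ _ _ h4 hr; rewrite /ee -(h4 i (i + r%:Z)); last lia.
by congr (_ * _ - _ * _); apply: congr_c; lia.
Qed.
Lemma eenorm i r : (1 <= r <= n.+2)%N -> 1 <= `|ee c i r|.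
Proof.
move=> hr; have [->|r1] := eqVneq r 1%N; first by rewrite ee1 normr1.
have [->|r2] := eqVneq r n.+2; first by rewrite een2 normr1.
apply: HP; apply: eeP; lia.
Qed.
Lemma eenz i r : (1 <= r <= n.+2)%N -> ee c i r != 0.
Proof. move=> /(eenorm i) h; apply/eqP=> x0; move: h; rewrite x0 normr0 ler10. by []. Qed.

Lemma eeT i s : (s <= n.+1)%N ->
  ee c (i + 1) s = ee c i s.+1 * \sum_(t < s) (ee c i t.+1 * ee c i t.+2)^-1.
Proof.
elim: s => [|s IH] hs; first by rewrite ee0 big_ord0 mulr0.
rewrite big_ord_recr /=.
have D := eeD i s.+1 ltac:(lia).
rewrite /= IH in D; last lia.
have ha := eenz i s.+1 ltac:(lia).
have hb := eenz i s.+2 ltac:(lia).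
move: D; set a := ee c i s.+1; set b := ee c i s.+2; set S := \sum_(_ < _) _.
move=> D.
have -> : ee c (i + 1) s.+1 = (1 + b * (a * S)) / a by rewrite -D; field.
by field; rewrite ha hb.
Qed.

Lemma rowtop i : `|ee c i n.+1| <= n.+1%:R.
Proof.
have -> : i = (i - 1) + 1 by rewrite subrK.
rewrite eeT // een2 mul1r.
apply: le_trans (ler_norm_sum _ _ _) _.
apply: le_trans (_ : \sum_(t < n.+1) (1 : algC) <= _); last by rewrite sumr_const card_ord.
apply: ler_sum => t _; have ht := ltn_ord t.
have h1 := eenorm (i - 1) t.+1 ltac:(lia).
have h2 := eenorm (i - 1) t.+2 ltac:(lia).
rewrite normfV normrM invf_le1 ?mulr_ege1 //.
by apply: lt_le_trans (mulr_ege1 h1 h2); rewrite ltr01.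
Qed.

Lemma rowb s : (s < n)%N -> forall i, `|ee c i (n.+1 - s)| <= beta s.
Proof.
elim: s => [|s IH] hs i; first by rewrite subn0 /=; exact: rowtop.
have IH' := IH ltac:(lia).
set r := (n.+1 - s)%N.
have -> : (n.+1 - s.+1)%N = r.-1 by rewrite /r; lia.
have D := eeD (i - 1) r ltac:(rewrite /r; lia).
rewrite subrK in D.
have h1 := eenorm (i - 1) r.+1 ltac:(rewrite /r; lia).
have e1 : ee c (i - 1) r.+1 * ee c i r.-1 = ee c (i - 1) r * ee c i r - 1.
  by rewrite -D; ring.
apply: le_trans (_ : `|ee c (i - 1) r.+1 * ee c i r.-1| <= _).
  by rewrite normrM mulrC; apply: ler_peMr => //.
rewrite e1 /=; apply: le_trans (ler_normB _ _) _.
rewrite normr1 lerD2r normrM expr2.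
by apply: ler_pM => //; apply: IH'.
Qed.

Lemma inL (L : seq algC) (hL : forall x, P x -> `|x| <= beta n -> x \in L) i r :
  (r <= n.+3)%N -> ee c i r \in [:: 0, 1 & L].
Proof.
move=> hr.
have [->|r0] := eqVneq r 0%N; first by rewrite ee0 inE eqxx.
have [->|r1] := eqVneq r 1%N; first by rewrite ee1 !inE eqxx orbT.
have [->|r2] := eqVneq r n.+2; first by rewrite een2 !inE eqxx orbT.
have [->|r3] := eqVneq r n.+3; first by rewrite een3 inE eqxx.
rewrite !inE hL ?orbT //; first by apply: eeP; lia.
have hs : (n.+1 - r < n)%N by lia.
have := rowb _ hs i; rewrite (_ : (n.+1 - (n.+1 - r))%N = r); last lia.
move=> h; apply: le_trans h _.
have := beta_mono (n.+1 - r) (n - (n.+1 - r)).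
by rewrite (_ : ((n.+1 - r) + (n - (n.+1 - r)))%N = n) //; lia.
Qed.
End One.

Definition DA (c c' : int -> int -> algC) i := forall r, (r <= n.+3)%N -> ee c i r = ee c' i r.

Lemma DA_step c c' i : is_frieze n P c -> is_frieze n P c' -> DA c c' i -> DA c c' (i + 1).
Proof.
move=> hc hc' h r hr.
have [->|r2] := eqVneq r n.+2; first by rewrite !een2.
have [->|r3] := eqVneq r n.+3; first by rewrite !een3.
rewrite !eeT //; try lia.
rewrite h; last lia.
congr (_ * _); apply: eq_bigr => t _; have ht := ltn_ord t.
by rewrite !h //; lia.
Qed.

Lemma DA_all c c' i0 : is_frieze n P c -> is_frieze n P c' -> DA c c' i0 ->
  forall i, i0 <= i -> DA c c' i.
Proof.
move=> hc hc' h i hi.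
have [k ->] : exists k : nat, i = i0 + k%:Z by exists (absz (i - i0)); lia.
elim: k => [|k IH]; first by rewrite (_ : i0 + 0%N%:Z = i0) //; lia.
rewrite (_ : i0 + k.+1%:Z = (i0 + k%:Z) + 1); last lia.
by apply: DA_step.
Qed.

Definition refl (c : int -> int -> algC) := fun i j => c (- j) (- i).

Lemma refl_frieze c : is_frieze n P c -> is_frieze n P (refl c).
Proof.
case=> h1 h2 h3 h4; split => [i|i|i j hij|i j hij]; rewrite /refl.
- split; first by case: (h1 (- i)).
  by rewrite -(h1 (- (i + n%:Z + 3))).2; apply: congr_c; lia.
- split.
    rewrite -(h2 (- (i + 1))).1; apply: congr_c; lia.
  rewrite -(h2 (- (i + n%:Z + 2))).2; apply: congr_c; lia.
- apply: h3; lia.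
- rewrite -(h4 (- (j + 1)) (- (i + 1))); last lia.
  rewrite [X in _ = X - _]mulrC; congr (_ * _ - _ * _); apply: congr_c; lia.
Qed.

Lemma uniq_frieze c c' : is_frieze n P c -> is_frieze n P c' ->
  (forall r, (r <= n.+3)%N -> c (- r%:Z) 0 = c' (- r%:Z) 0) -> frieze_agree n c c'.
Proof.
move=> hc hc' h.
have hr0 : DA (refl c) (refl c') 0.
  move=> r hr; rewrite /ee /refl add0r oppr0; exact: h.
have hneg : forall p q, q <= 0 -> p <= q <= p + n%:Z + 3 -> c p q = c' p q.
  move=> p q hq hpq.
  have := DA_all _ _ _ (refl_frieze _ hc) (refl_frieze _ hc') hr0 (- q) ltac:(lia)
     (absz (q - p)) ltac:(lia).
  rewrite /ee /refl opprK.
  by rewrite (_ : - (- q + (absz (q - p))%:Z) = p) //; lia.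
have hm : DA c c' (- (n%:Z + 3)).
  move=> r hr; rewrite /ee; apply: hneg; lia.
move=> p q hpq.
have [hq|hq] := lerP q 0; first exact: hneg.
have := DA_all _ _ _ hc hc' hm p ltac:(lia) (absz (q - p)) ltac:(lia).
by rewrite /ee (_ : p + (absz (q - p))%:Z = q) //; lia.
Qed.

Fixpoint cands (L : seq algC) (k : nat) : seq (seq algC) :=
  if k is k'.+1 then [seq x :: s | x <- L, s <- cands L k'] else [:: [::]].

Lemma cands_mem L s : all (mem L) s -> s \in cands L (size s).
Proof.
elim: s => [|x s IH] /=. by [].
by move=> /andP[hx hs]; apply: allpairs_f => //; apply: IH.
Qed.

Definition sig (c : int -> int -> algC) := [seq c (- r%:Z) 0 | r <- iota 0 n.+4].

Hypothesis Hfin : forall B : algC, exists L : seq algC, forall x, P x -> `|x| <= B -> x \in L.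

Theorem frieze_finite : finitely_many_friezes n P.
Proof.
have [L hL] := Hfin (beta n).
set L' := [:: 0, 1 & L].
set C := cands L' n.+4.
pose pick (s : seq algC) := epsilon (inhabits (fun _ _ : int => (0 : algC)))
   (fun c' => is_frieze n P c' /\ sig c' = s).
exists (size C), (fun k => pick (nth [::] C k)).
move=> c hc.
have hsig : sig c \in C.
  have := cands_mem L' (sig c); rewrite size_map size_iota; apply.
  apply/allP => x /mapP [r]; rewrite mem_iota add0n => /andP[_ hr] ->.
  have := @inL c hc L hL (- r%:Z) r ltac:(lia).
  by rewrite /ee (_ : - r%:Z + r%:Z = 0) //; lia.
have hi : (index (sig c) C < size C)%N by rewrite index_mem.
exists (Ordinal hi) => /=.
rewrite nth_index //.
have [hc' hs] : is_frieze n P (pick (sig c)) /\ sig (pick (sig c)) = sig c.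
  by rewrite /pick; apply: (epsilon_spec _ (fun c' => is_frieze n P c' /\ sig c' = sig c)); exists c.
apply: uniq_frieze => // r hr.
have := congr1 (fun s => nth 0 s r) hs.
by rewrite /sig !(nth_map 0%N) ?size_iota // nth_iota.
Qed.
End Frieze.
Lemma sq0 (x : int) : 0 <= x * x. Proof. by rewrite -expr2 sqr_ge0. Qed.
Lemma sq1 (x : int) : 0 <= x * (x - 1).
Proof. have [h|h] := lerP x 0. apply: mulr_le0 => //; lia. apply: mulr_ge0; lia. Qed.
Lemma sq2 (x : int) : 0 <= x * (x + 1).
Proof. have [h|h] := lerP x (-1). apply: mulr_le0 => //; lia. apply: mulr_ge0; lia. Qed.
Lemma boundab (a b t : int) (K : nat) : -1 <= t <= 1 -> a ^+ 2 + t * a * b + b ^+ 2 < K%:Z ->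
  - (2 * K)%:Z <= a <= (2 * K)%:Z /\ - (2 * K)%:Z <= b <= (2 * K)%:Z.
Proof.
move=> ht h. rewrite !expr2 in h.
have h1 := sq0 (a - b). have h2 := sq0 (a + b). have h3 := sq1 a. have h4 := sq2 a.
have h5 := sq1 b. have h6 := sq2 b. have h7 := sq0 a. have h8 := sq0 b.
have : t = -1 \/ t = 0 \/ t = 1 by lia.
case=> [tt|[tt|tt]]; rewrite tt in h; nia.
Qed.

Section Lattice.
Variables (z : algC) (t : int).
Hypothesis ht : -2 <= t <= 2.
Hypothesis hz2 : z ^+ 2 = t%:~R * z - 1.
Hypothesis hz1 : `|z| = 1.

Lemma Zring_ab x : Zring z x -> exists a b : int, x = a%:~R + b%:~R * z.
Proof.
pose T (y : algC) := exists a b : int, y = a%:~R + b%:~R * z.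
have T0 : T 0 by exists 0, 0; rewrite mulr0z mul0r addr0.
have TD : forall x y, T x -> T y -> T (x + y).
  move=> x' y [a [b ->]] [a' [b' ->]]; exists (a + a'), (b + b').
  by rewrite !rmorphD /=; ring.
have TZ : forall (k : int) x, T x -> T (k%:~R * x).
  move=> k x' [a [b ->]]; exists (k * a), (k * b); rewrite !rmorphM /=; ring.
have TX : forall i, T (z ^+ i).
  elim=> [|i [a [b IH]]]; first by exists 1, 0; rewrite expr0 mulr0z mul0r addr0.
  exists (- b), (a + t * b); rewrite exprS IH !rmorphD !rmorphM rmorphN /=.
  have -> : z * (a%:~R + b%:~R * z) = a%:~R * z + b%:~R * z ^+ 2 by ring.
  rewrite hz2; ring.
move=> [s ->]; apply: (big_ind T) => // i _; exact: TZ.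
Qed.

Lemma zn0 : z != 0.
Proof. by apply/eqP => h; move: hz1; rewrite h normr0 => /eqP; rewrite eq_sym oner_eq0. Qed.

Lemma conjz : z^* = t%:~R - z.
Proof.
apply: (mulfI zn0).
rewrite -normCK hz1 expr1n mulrBr -expr2 hz2; ring.
Qed.

Lemma norm2 a b : `|a%:~R + b%:~R * z| ^+ 2 = (a ^+ 2 + t * a * b + b ^+ 2)%:~R.
Proof.
rewrite normCK rmorphD rmorphM /= !rmorph_int conjz.
rewrite !(rmorphD, rmorphM, rmorphXn) /=.
have -> : (a%:~R + b%:~R * z) * (a%:~R + b%:~R * (t%:~R - z)) =
  (a%:~R ^+ 2 + t%:~R * a%:~R * b%:~R + b%:~R ^+ 2) + b%:~R ^+2 * (t%:~R * z - z^+2 - 1) :> algC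
  by ring.
by rewrite hz2; ring.
Qed.

Lemma Zring_norm x : Zring z x -> x != 0 -> 1 <= `|x|.
Proof.
move=> /Zring_ab [a [b ->]] hx.
have h2 := norm2 a b.
have hN : 0 < a ^+ 2 + t * a * b + b ^+ 2.
  have : 0 < `|a%:~R + b%:~R * z| ^+ 2 by rewrite exprn_gt0 // normr_gt0.
  by rewrite h2 ltr0z.
have : 1 <= `|a%:~R + b%:~R * z| ^+ 2.
  by rewrite h2 -[1]/(1%:~R) ler_int; lia.
by rewrite expr_ge1.
Qed.

Definition rng (K : nat) := [seq i%:Z - (2 * K)%:Z | i <- iota 0 (4 * K).+1].

Lemma inrng (K : nat) (a : int) : - (2 * K)%:Z <= a <= (2 * K)%:Z -> a \in rng K.
Proof.
move=> ha; apply/mapP; exists (absz (a + (2 * K)%:Z)); last by lia.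
by rewrite mem_iota; lia.
Qed.

Lemma Zring_fin (B : algC) :
  exists L : seq algC, forall x, Zring z x -> `|x| <= B -> x \in L.
Proof.
set K := Num.Def.archi_bound (B ^+ 2).
exists [seq a%:~R + b%:~R * z | a <- rng K, b <- rng K].
move=> x /Zring_ab [a [b ->]] hB.
have B0 : 0 <= B by apply: le_trans hB.
have hK : B ^+ 2 < K%:R by apply: archi_boundP; exact: exprn_ge0.
have hN : a ^+ 2 + t * a * b + b ^+ 2 < K%:Z.
  rewrite -(ltr_int algC) -norm2.
  apply: le_lt_trans hK.
  by rewrite ler_pXn2r // ?nnegrE.
have hmem : forall a' b' : int, - (2 * K)%:Z <= a' <= (2 * K)%:Z ->
    - (2 * K)%:Z <= b' <= (2 * K)%:Z -> a'%:~R + b'%:~R * z \in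
    [seq a%:~R + b%:~R * z | a <- rng K, b <- rng K].
  move=> a' b' ha hb; apply/allpairsP; exists (a', b') => /=; split => //; exact: inrng.
have [t2|t2] := eqVneq t 2.
  have z1 : z = 1.
    have : (z - 1) ^+ 2 = 0 by rewrite sqrrB hz2 t2 mulr1 expr1n; ring.
    by move/eqP; rewrite expf_eq0 /= subr_eq0 => /eqP.
  have -> : a%:~R + b%:~R * z = (a + b)%:~R + (0 : int)%:~R * z.
    by rewrite z1 mulr1 rmorphD mulr0z mul0r addr0.
  apply: hmem; rewrite t2 in hN; nia.
have [t2'|t2'] := eqVneq t (-2).
  have z1 : z = -1.
    have : (z + 1) ^+ 2 = 0.
      by rewrite sqrrD hz2 t2' mulr1 expr1n; rewrite (_ : (-2)%:~R = - 2 :> algC) //; ring.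
    by move/eqP; rewrite expf_eq0 /= addr_eq0 => /eqP.
  have -> : a%:~R + b%:~R * z = (a - b)%:~R + (0 : int)%:~R * z.
    by rewrite z1 mulrN1 rmorphB mulr0z mul0r addr0.
  apply: hmem; rewrite t2' in hN; nia.
have [h1 h2] := @boundab a b t K ltac:(move: t2 t2'; lia) hN.
exact: hmem.
Qed.
End Lattice.

Lemma norm_root1 (w : algC) (e : nat) : (0 < e)%N -> w ^+ e = 1 -> `|w| = 1.
Proof.
move=> he hw; have := pexpr_eq1 he (normr_ge0 w).
rewrite -normrX hw normr1 eqxx => /esym/eqP; done.
Qed.

Lemma conj_root1 (w : algC) : `|w| = 1 -> w^* = w^-1.
Proof. by move=> h; rewrite invC_norm h expr1n invr1 mul1r. Qed.

Definition dlist := [:: 1; 2; 3; 4; 6]%N.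

Lemma dlistP d : d \in dlist -> d = 1%N \/ d = 2%N \/ d = 3%N \/ d = 4%N \/ d = 6%N.
Proof.
rewrite !inE => /orP[/eqP->|/orP[/eqP->|/orP[/eqP->|/orP[/eqP->|/eqP->]]]]; tauto.
Qed.

Lemma dvd_dlist (d k : nat) : (0 < d)%N -> k \in dlist -> (d %| k)%N -> d \in dlist.
Proof.
move=> d0 hk hdk.
have k0 : (0 < k)%N by case/dlistP: hk => [->|[->|[->|[->|->]]]].
have hle : (d <= k)%N := dvdn_leq k0 hdk.
case/dlistP: hk hdk hle => [->|[->|[->|[->|->]]]];
  by case: d d0 => [|[|[|[|[|[|[|d]]]]]]].
Qed.

Lemma root_from (z : algC) (t : int) (k : nat) (Q : algC) :
  z ^+ 2 = t%:~R * z - 1 -> z ^+ k - 1 = Q * (z ^+ 2 - (t%:~R * z - 1)) -> z ^+ k = 1.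
Proof. by move=> h e; apply/eqP; rewrite -subr_eq0 e h subrr mulr0. Qed.

Lemma quad_to_d (d : nat) (z : algC) (t : int) : d.-primitive_root z ->
  -2 <= t <= 2 -> z ^+ 2 = t%:~R * z - 1 -> d \in dlist.
Proof.
move=> hz ht h.
have d0 := prim_order_gt0 hz.
have hd := prim_order_dvd hz.
have fin k : k \in dlist -> z ^+ k = 1 -> d \in dlist.
  by move=> hk e; apply: (@dvd_dlist d k d0 hk); rewrite hd e.
have : t = -2 \/ t = -1 \/ t = 0 \/ t = 1 \/ t = 2 by lia.
case=> [tt|[tt|[tt|[tt|tt]]]]; rewrite tt in h.
- apply: (fin 2%N) => //.
  have : (z + 1) ^+ 2 = 0 by rewrite sqrrD h rmorphN /=; ring.
  by move/eqP; rewrite expf_eq0 /= addr_eq0 => /eqP ->; ring.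
- apply: (fin 3%N) => //; apply: (@root_from z (-1) 3 (z - 1) h); ring.
- apply: (fin 4%N) => //; apply: (@root_from z 0 4 (z ^+ 2 - 1) h); ring.
- apply: (fin 6%N) => //; apply: (@root_from z 1 6 ((z ^+ 3 - 1) * (z + 1)) h); ring.
- apply: (fin 1%N) => //.
  have : (z - 1) ^+ 2 = 0 by rewrite sqrrB h; ring.
  by move/eqP; rewrite expf_eq0 /= subr_eq0 => /eqP ->; ring.
Qed.

Lemma d_to_quad (d : nat) (z : algC) : d.-primitive_root z -> d \in dlist ->
  exists t : int, -2 <= t <= 2 /\ z ^+ 2 = t%:~R * z - 1.
Proof.
move=> hz hin; have hd := prim_order_dvd hz.
have z1 k : (d %| k)%N -> z ^+ k = 1 by rewrite hd => /eqP.
have zn1 k : ~~ (d %| k)%N -> z ^+ k != 1 by rewrite hd.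
case/dlistP: hin => [dd|[dd|[dd|[dd|dd]]]]; rewrite dd in z1 zn1.
- exists 2; split => //; have := z1 1%N isT; rewrite expr1 => ->; ring.
- exists (-2); split => //; rewrite rmorphN /=.
  have e : (z - 1) * (z + 1) = 0 by rewrite (_ : _ * _ = z ^+ 2 - 1); [rewrite z1 // subrr|ring].
  move/eqP: e; rewrite mulf_eq0 subr_eq0 addr_eq0 => /orP[/eqP h1|/eqP ->].
    by move: (zn1 1%N isT); rewrite expr1 h1 eqxx.
  ring.
- exists (-1); split => //; rewrite rmorphN /=.
  have e : (z - 1) * (z ^+ 2 + z + 1) = 0 by rewrite (_ : _ * _ = z ^+ 3 - 1); [rewrite z1 // subrr|ring].
  move/eqP: e; rewrite mulf_eq0 subr_eq0 => /orP[/eqP h1|/eqP h2].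
    by move: (zn1 1%N isT); rewrite expr1 h1 eqxx.
  by apply/eqP; rewrite -subr_eq0 -h2 eq_sym; apply/eqP; ring.
- exists 0; split => //.
  have e : (z ^+ 2 - 1) * (z ^+ 2 + 1) = 0 by rewrite (_ : _ * _ = z ^+ 4 - 1); [rewrite z1 // subrr|ring].
  move/eqP: e; rewrite mulf_eq0 subr_eq0 => /orP[/eqP h1|/eqP h2].
    by move: (zn1 2%N isT); rewrite h1 eqxx.
  by apply/eqP; rewrite -subr_eq0 -h2 eq_sym; apply/eqP; ring.
- exists 1; split => //.
  have e : (z ^+ 3 - 1) * (z ^+ 3 + 1) = 0 by rewrite (_ : _ * _ = z ^+ 6 - 1); [rewrite z1 // subrr|ring].
  move/eqP: e; rewrite mulf_eq0 subr_eq0 => /orP[/eqP h1|/eqP h2].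
    by move: (zn1 3%N isT); rewrite h1 eqxx.
  have e2 : (z + 1) * (z ^+ 2 - z + 1) = 0 by rewrite -h2; ring.
  move/eqP: e2; rewrite mulf_eq0 addr_eq0 => /orP[/eqP h1|/eqP h3].
    by move: (zn1 2%N isT); rewrite h1; rewrite (_ : (- 1) ^+ 2 = 1 :> algC) ?eqxx //; ring.
  by apply/eqP; rewrite -subr_eq0 -h3 eq_sym; apply/eqP; ring.
Qed.

Section Forward.
Variables (d : nat) (z : algC).
Hypothesis hz : d.-primitive_root z.
Hypothesis hd : d \in dlist.

Lemma lat_norm : forall x, Zring z x -> x != 0 -> 1 <= `|x|.
Proof.
have [t [ht h2]] := @d_to_quad d z hz hd.
have h1 := @norm_root1 z d (prim_order_gt0 hz) (prim_expr_order hz).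
exact: (@Zring_norm z t ht h2 h1).
Qed.

Lemma lat_fin : forall B : algC, exists L : seq algC, forall x, Zring z x -> `|x| <= B -> x \in L.
Proof.
have [t [ht h2]] := @d_to_quad d z hz hd.
have h1 := @norm_root1 z d (prim_order_gt0 hz) (prim_expr_order hz).
exact: (@Zring_fin z t ht h2 h1).
Qed.

Lemma iv_ii : discrete_subset (Zring z).
Proof.
move=> x hx; exists 1; first exact: ltr01.
move=> y hy hyx; apply: lat_norm; first exact: ZringB.
by rewrite subr_eq0.
Qed.

Lemma iv_iii : finite_units_Zring z.
Proof.
have [L hL] := lat_fin 1; exists L => u hu [v hv huv].
apply: hL => //.
have un : u != 0 by apply/eqP => u0; move: huv; rewrite u0 mul0r => /eqP; rewrite eq_sym oner_eq0.
have vn : v != 0 by apply/eqP => v0; move: huv; rewrite v0 mulr0 => /eqP; rewrite eq_sym oner_eq0.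
have e : `|u| * `|v| = 1 by rewrite -normrM huv normr1.
rewrite -e; apply: ler_peMr => //; exact: lat_norm.
Qed.

Lemma iv_i : forall n : nat, finitely_many_friezes n (fun x => Zring z x /\ x <> 0).
Proof.
move=> n; apply: frieze_finite.
  by move=> x [hx hx0]; apply: lat_norm => //; apply/eqP.
move=> B; have [L hL] := lat_fin B; exists L => x [hx _]; exact: hL.
Qed.
End Forward.

Lemma odd_abs_succ (i : int) : odd (absz (i + 1)) = ~~ odd (absz i).
Proof.
case: i => k.
  by rewrite (_ : absz (Posz k + 1) = k.+1) //; lia.
rewrite (_ : absz (Negz k + 1) = k); last lia.
by rewrite (_ : absz (Negz k) = k.+1) /= ?negbK //; lia.
Qed.

Section Height1.
Variables (z u v : algC).
Hypotheses (hu : Zring z u) (hv : Zring z v) (huv : u * v = 1).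

Definition g1 (i k : int) : algC :=
  if k == 0 then 0 else if k == 1 then 1 else
  if k == 2 then (if odd (absz i) then 2 * v else u)
  else if k == 3 then 1 else 0.
Definition c1 (i j : int) := g1 i (j - i).

Lemma un0 : u != 0.
Proof. by apply/eqP => u0; move: huv; rewrite u0 mul0r => /eqP; rewrite eq_sym oner_eq0. Qed.
Lemma vn0 : v != 0.
Proof. by apply/eqP => v0; move: huv; rewrite v0 mulr0 => /eqP; rewrite eq_sym oner_eq0. Qed.

Lemma g1_0 i : g1 i 0 = 0. Proof. by []. Qed.
Lemma g1_1 i : g1 i 1 = 1. Proof. by []. Qed.
Lemma g1_2 i : g1 i 2 = if odd (absz i) then 2 * v else u. Proof. by []. Qed.
Lemma g1_3 i : g1 i 3 = 1. Proof. by []. Qed.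
Lemma g1_4 i : g1 i 4 = 0. Proof. by []. Qed.

Lemma frieze1 : is_frieze 1 (fun x => Zring z x /\ x <> 0) c1.
Proof.
split => [i|i|i j hij|i j hij]; rewrite /c1.
- rewrite subrr (_ : i + 1%:Z + 3 - i = 4); last lia. by [].
- rewrite (_ : i + 1 - i = 1); last lia. rewrite (_ : i + 1%:Z + 2 - i = 3); last lia. by [].
- rewrite (_ : j - i = 2); last lia.
  rewrite /g1; case: ifP => _; split.
  + by apply: ZringM => //; exact: (Zring_int z 2).
  + by apply/eqP; rewrite mulf_eq0 negb_or vn0 pnatr_eq0.
  + exact: hu.
  + by apply/eqP; exact: un0.
- have : j - i = 1 \/ j - i = 2 \/ j - i = 3 by lia.
  have e1 : j + 1 - (i + 1) = j - i by lia.
  have e2 : j + 1 - i = (j - i) + 1 by lia.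
  have e3 : j - (i + 1) = (j - i) - 1 by lia.
  rewrite e1 e2 e3.
  case=> [->|[->|->]].
  + rewrite (_ : (1 : int) - 1 = 0); last lia. rewrite (_ : (1 : int) + 1 = 2); last lia.
    by rewrite g1_1 g1_0 mulr0 subr0 mulr1.
  + rewrite (_ : (2 : int) + 1 = 3); last lia. rewrite (_ : (2 : int) - 1 = 1); last lia.
    rewrite !g1_2 g1_3 g1_1 odd_abs_succ; case: (odd _) => /=;
      by transitivity (2 * (u * v) - 1); [ring | rewrite huv; ring].
  + rewrite (_ : (3 : int) + 1 = 4); last lia. rewrite (_ : (3 : int) - 1 = 2); last lia.
    by rewrite !g1_3 g1_4 mul0r subr0 mulr1.
Qed.
End Height1.

Lemma i_iii (z : algC) :
  (forall n : nat, finitely_many_friezes n (fun x => Zring z x /\ x <> 0)) ->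
  finite_units_Zring z.
Proof.
move=> h; have [N [f hf]] := h 1%N.
exists [seq f k 0 2 | k <- enum 'I_N] => u hu [v hv huv].
have [k hk] := hf _ (@frieze1 z u v hu hv huv).
have := hk 0 2 ltac:(lia).
rewrite /c1 /g1 subr0 /= => ->; apply/mapP; exists k => //; exact: mem_enum.
Qed.

Lemma ii_iv (d : nat) (z : algC) : d.-primitive_root z -> discrete_subset (Zring z) ->
  d \in dlist.
Proof.
move=> hz hdisc.
have d0 := prim_order_gt0 hz.
have hz1 : `|z| = 1 := @norm_root1 z d d0 (prim_expr_order hz).
have zc : z^* = z^-1 := @conj_root1 z hz1.
have zn0 : z != 0.
  by apply/eqP => h; move: hz1; rewrite h normr0 => /eqP; rewrite eq_sym oner_eq0.
have zinv : z ^+ d.-1 = z^-1.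
  by apply: (mulfI zn0); rewrite mulfV // -exprS prednK // prim_expr_order.
set r := z + z ^+ d.-1.
have hr : Zring z r by apply: ZringD; [exact: Zring_z | exact: (ZringX z _ (Zring_z z))].
have rreal : r \is Num.real.
  by apply/CrealP; rewrite /r zinv rmorphD /= -zc conjCK addrC.
have [eps eps0 heps] := hdisc 0 (Zring0 z).
set m := Num.floor r.
set x := r - m%:~R.
have hx : Zring z x by apply: ZringB => //; exact: Zring_int.
have /andP[hm1 hm2] := real_floor_itv rreal.
have x0 : 0 <= x by rewrite subr_ge0.
have x1 : x < 1 by rewrite /x ltrBlDr; apply: (lt_le_trans hm2); rewrite rmorphD /= addrC.
have [xz|xnz] := eqVneq x 0.
  have rm : r = m%:~R by apply/eqP; rewrite -subr_eq0 -/x xz.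
  have h2 : z ^+ 2 = m%:~R * z - 1.
    rewrite -rm /r zinv mulrDl mulVf // expr2; ring.
  apply: (@quad_to_d d z m hz _ h2).
  have : `|m%:~R : algC| <= 2.
    rewrite -rm; apply: le_trans (ler_normD _ _) _.
    by rewrite normrX hz1 expr1n; rewrite (_ : (1 : algC) + 1 = 2) //.
  rewrite -intr_norm (_ : (2 : algC) = (2 : int)%:~R) // ler_int ler_norml.
  by [].
exfalso.
pose w := if 2 * x <= 1 then x else 1 - x.
have hw : Zring z w by rewrite /w; case: ifP => _ //; apply: ZringB => //; exact: Zring1.
have w0 : 0 < w.
  rewrite /w; case: ifP => _; first by rewrite lt0r xnz x0.
  by rewrite subr_gt0.
have w1 : 2 * w <= 1.
  rewrite /w; case: ifP => // h.
  have xr : x \is Num.real by rewrite ger0_real.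
  have : 1 < 2 * x.
    by rewrite real_ltNge ?h //; apply: rpredM => //; apply: realn.
  by move=> h'; rewrite mulrBr mulr1 lerBlDr; rewrite -(_ : 1 + 1 = (2 : algC)) //; rewrite lerD2l ltW.
set N := Num.Def.archi_bound (eps^-1).
have hN : eps^-1 < N%:R by apply: archi_boundP; rewrite invr_ge0 ltW.
have h2N : (N%:R : algC) <= 2 ^+ N.
  by rewrite -natrX ler_nat ltnW // ltn_expl.
have hwN : Zring z (w ^+ N) by exact: ZringX.
have wNnz : w ^+ N != 0 by rewrite expf_neq0 // gt_eqF.
have := heps _ hwN wNnz; rewrite subr0 normrX (ger0_norm (ltW w0)) => hle.
have : eps * 2 ^+ N <= 1.
  apply: le_trans (_ : w ^+ N * 2 ^+ N <= 1).
    by rewrite ler_pM2r ?exprn_gt0 // ltr0n.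
  rewrite -exprMn mulrC; apply: exprn_ile1 => //.
  by rewrite mulr_ge0 ?ltW.
move=> hle2.
have h1 : 1 < eps * 2 ^+ N.
  by rewrite -(ltr_pdivrMl _ _ eps0) mulr1; exact: lt_le_trans hN h2N.
by have := lt_le_trans h1 hle2; rewrite ltxx.
Qed.

Lemma key_id (p q : algC) : p != 0 -> q != 0 ->
  (p - q) * (1 - p * q) = p * q * ((p - 1) * (p^-1 - 1) - (q - 1) * (q^-1 - 1)).
Proof. by move=> hp hq; field; rewrite hp hq. Qed.

Lemma unit_inf (z w : algC) (e a b : nat) :
  w ^+ e = 1 -> (forall j, (0 < j < e)%N -> w ^+ j != 1) -> Zring z w ->
  (1 < a)%N -> (a.+1 < e)%N -> ((a * b) %% e = 1)%N -> ~ finite_units_Zring z.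
Proof.
move=> we wj hw a1 ae hab [s hs].
have e0 : (0 < e)%N by lia.
have w1 : `|w| = 1 := @norm_root1 w e e0 we.
have wn0 : w != 0.
  by apply/eqP => h; move: w1; rewrite h normr0 => /eqP; rewrite eq_sym oner_eq0.
have wne1 : w - 1 != 0 by rewrite subr_eq0; have := wj 1%N ltac:(lia); rewrite expr1.
set eta := w ^+ a.
have etan0 : eta != 0 by rewrite expf_neq0.
have eta1 : `|eta| = 1 by rewrite normrX w1 expr1n.
set u := \sum_(k < a) w ^+ k.
set v := \sum_(k < b) eta ^+ k.
have hu : Zring z u by apply: Zring_sum => k _; exact: ZringX.
have hv : Zring z v by apply: Zring_sum => k _; apply: ZringX; exact: ZringX.
have eu : w ^+ a - 1 = (w - 1) * u := subrX1 w a.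
have ev : eta ^+ b - 1 = (eta - 1) * v := subrX1 eta b.
have etab : eta ^+ b = w by rewrite -exprM -(expr_mod _ we) hab expr1.
have huv : u * v = 1.
  apply: (mulfI wne1); rewrite mulr1 mulrA -eu -/eta -ev etab //.
have un0 : u != 0.
  by apply/eqP => h; move: huv; rewrite h mul0r => /eqP; rewrite eq_sym oner_eq0.
have unorm : `|u| != 1.
  apply/eqP => hu1.
  have n1 : `|eta - 1| = `|w - 1| by rewrite -/eta eu normrM hu1 mulr1.
  have E : (eta - 1) * (eta^-1 - 1) = (w - 1) * (w^-1 - 1).
    have := congr1 (fun x => x ^+ 2) n1; rewrite /= !normCK !rmorphB /= !rmorph1.
    by rewrite (@conj_root1 eta eta1) (@conj_root1 w w1).
  have F : (eta - w) * (1 - eta * w) = 0.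
    rewrite key_id //.
    by rewrite E subrr mulr0.
  move/eqP: F; rewrite mulf_eq0 => /orP[|].
    rewrite subr_eq0 => /eqP he.
    have : w ^+ a.-1 = 1.
      apply: (mulIf wn0); rewrite mul1r -exprSr prednK; last lia.
      by rewrite -/eta he.
    by move/eqP; apply/negP; apply: wj; lia.
  rewrite subr_eq0 => /eqP he.
  have : w ^+ a.+1 = 1 by rewrite exprSr -/eta he.
  by move/eqP; apply/negP; apply: wj; lia.
have inj : forall i j, (i < j)%N -> u ^+ i != u ^+ j.
  move=> i j hij; apply/eqP => h.
  have hji : (0 < j - i)%N by rewrite subn_gt0.
  have e1 : u ^+ (j - i) = 1.
    apply: (mulfI (expf_neq0 i un0)); rewrite mulr1 -exprD subnKC; last exact: ltnW.
    by rewrite h.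
  have : `|u| ^+ (j - i) = 1 by rewrite -normrX e1 normr1.
  move/eqP; rewrite (pexpr_eq1 hji (normr_ge0 u)).
  by apply/negP.
set T := [seq u ^+ k | k <- iota 0 (size s).+1].
have uT : uniq T.
  rewrite map_inj_in_uniq ?iota_uniq // => i j _ _ h.
  by case: (ltngtP i j) => // hij; [move: (inj _ _ hij)|move: (inj _ _ hij)];
    rewrite ?h ?eqxx.
have sT : {subset T <= s}.
  move=> y /mapP [k _ ->]; apply: hs; first exact: ZringX.
  exists (v ^+ k); first exact: ZringX.
  by rewrite -exprMn huv expr1n.
have := uniq_leq_size uT sT; rewrite /T size_map size_iota ltnn. done.
Qed.

Lemma iii_iv (d : nat) (z : algC) : d.-primitive_root z -> finite_units_Zring z -> d \in dlist.
Proof.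
move=> hz hfu; case: (boolP (d \in dlist)) => // hn; exfalso.
have d0 := prim_order_gt0 hz.
have hd := prim_order_dvd hz.
have zde := prim_expr_order hz.
move: hn; rewrite !inE => hn.
have zj : forall j, (0 < j < d)%N -> z ^+ j != 1.
  by move=> j /andP[j0 jd]; rewrite -hd gtnNdvd.
have m2 := modn2 d.
case: (boolP (odd d)) => hodd.
  have e1 : (2 * ((d + 1) %/ 2) = d + 1)%N by rewrite hodd in m2; lia.
  apply: (@unit_inf z z d 2 ((d + 1) %/ 2) zde zj (Zring_z z) _ _ _ hfu) => //.
    by rewrite hodd in m2; lia.
  by rewrite e1 modnDl modn_small //; lia.
rewrite (negbTE hodd) in m2.
set d' := (d %/ 2)%N.
have dd : d = (2 * d')%N by rewrite /d'; lia.
have d'0 : (0 < d')%N by lia.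
have zd'1 : z ^+ d' != 1 by apply: zj; lia.
have zd' : z ^+ d' = -1.
  have : (z ^+ d' - 1) * (z ^+ d' + 1) = 0.
    by rewrite (_ : _ * _ = z ^+ d' ^+ 2 - 1); [rewrite -exprM mulnC -dd zde subrr|ring].
  move/eqP; rewrite mulf_eq0 subr_eq0 (negbTE zd'1) /= addr_eq0 => /eqP; done.
have m2' := modn2 d'.
case: (boolP (odd d')) => hodd'.
  rewrite hodd' in m2'.
  have e1 : (2 * ((d' + 1) %/ 2) = d' + 1)%N by lia.
  have we : (- z) ^+ d' = 1.
    by rewrite exprNn -signr_odd hodd' expr1 zd' mulrNN mul1r.
  have wj : forall j, (0 < j < d')%N -> (- z) ^+ j != 1.
    move=> j /andP[j0 jd]; apply/eqP => h.
    have : z ^+ (2 * j) = 1.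
      by rewrite exprM -(sqrrN z) -exprM mulnC exprM h expr1n.
    move/eqP; rewrite -hd dd dvdn_pmul2l // gtnNdvd //.
  apply: (@unit_inf z (- z) d' 2 ((d' + 1) %/ 2) we wj (ZringN z (Zring_z z)) _ _ _ hfu) => //.
    by lia.
  by rewrite e1 modnDl modn_small //; lia.
rewrite (negbTE hodd') in m2'.
set k := (d' %/ 2)%N.
have dk : d = (4 * k)%N by rewrite /k; lia.
have k2 : (2 <= k)%N by lia.
have e1 : ((2 * k - 1) * (2 * k - 1) = (k - 1) * d + 1)%N by rewrite dk; nia.
apply: (@unit_inf z z d (2 * k - 1) (2 * k - 1) zde zj (Zring_z z) _ _ _ hfu).
- by lia.
- by lia.
by rewrite e1 modnMDl modn_small //; lia.
Qed.

Theorem corollary3p10 (d : nat) (z : algC) :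
  d.-primitive_root z ->
  [<-> (forall n : nat, finitely_many_friezes n (fun x => Zring z x /\ x <> 0));
       discrete_subset (Zring z);
       finite_units_Zring z;
       d \in [:: 1; 2; 3; 4; 6]%N].
Proof.
move=> hz; tfae.
- move=> h; apply: (@iv_ii d z hz); apply: (@iii_iv d z hz); exact: i_iii.
- move=> h; apply: (@iv_iii d z hz); exact: (@ii_iv d z hz).
- exact: (@iii_iv d z hz).
- move=> hd; exact: (@iv_i d z hz hd).
Qed.
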